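(* For any positive integers $n,p$ and any $k\ge 3$ (possibly $k=\infty$), there exists a path system $S$ with $n$ nodes, $p$ paths, bridge girth $>k$, size $\|S\|=\Theta(\beta(n,p,k))$, and no $2$-cycles.
   Context: A path system is a pair $S=(V,\Pi)$ where $V$ is a finite ground set of nodes and $\Pi$ is a multiset of finite sequences of nodes (paths), each containing each node at most once. The size is $\|S\|=\sum_{\pi\in\Pi}|\pi|$ ($|\pi|$ = number of nodes of $\pi$). Write $x<_\pi y$ if $x,y\in\pi$ and $x$ strictly precedes $y$ in $\pi$. A $b$-bridge consists of $b$ distinct nodes $v_1,\dots,v_b$ and $b$ distinct paths $\pi_1,\dots,\pi_b$ with $v_i<_{\pi_i}v_{i+1}$ for $1\le i\le b-1$ and $v_1<_{\pi_b}v_b$. The bridge girth is the least $b$ for which there is a $b$-bridge ($\infty$ if none). $\beta(n,p,k)$ is the maximum possible size of a path system with $n$ nodes, $p$ paths and bridge girth $>k$. A $2$-cycle in a path system is a pair of nodes $u,v$ and a pair of paths $\pi_1,\pi_2$ with $u<_{\pi_1}v$ and $v<_{\pi_2}u$. *)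

(* Defs.v *)
From mathcomp Require Import all_boot.
Set Implicit Arguments. Unset Strict Implicit. Unset Printing Implicit Defensive.

(* A path system with ground set V = 'I_n and a multiset of p paths,
   represented as a p-tuple (paths indexed by 'I_p, repetitions allowed). *)
Definition path_system (n p : nat) := p.-tuple (seq 'I_n).

Definition valid_ps n p (S : path_system n p) : bool := all uniq S.

Definition ps_size n p (S : path_system n p) : nat := sumn (map size S).

Definition prec n (pi : seq 'I_n) (x y : 'I_n) : bool :=
  [&& x \in pi, y \in pi & index x pi < index y pi].

Definition path_of n p (S : path_system n p) (i : 'I_p) : seq 'I_n := tnth S i.

(* A b-bridge, b = b'.+1, with 0-based indices: distinct nodes v_0..v_b',
   distinct paths (distinct indices in the multiset) q_0..q_b',
   v_i <_{q_i} v_{i+1} for i < b', and v_0 <_{q_b'} v_b'. *)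
Definition has_bridge n p (S : path_system n p) (b : nat) : Prop :=
  exists b', b = b'.+1 /\
  exists (v : 'I_b'.+1 -> 'I_n) (q : 'I_b'.+1 -> 'I_p),
    injective v /\ injective q /\
    (forall i : 'I_b',
        prec (path_of S (q (widen_ord (leqnSn b') i)))
             (v (widen_ord (leqnSn b') i)) (v (lift ord0 i))) /\
    prec (path_of S (q ord_max)) (v ord0) (v ord_max).

(* k : option nat, with None standing for k = infinity. *)
Definition le_ext (b : nat) (k : option nat) : Prop :=
  match k with Some k => b <= k | None => True end.

Definition girth_gt n p (S : path_system n p) (k : option nat) : Prop :=
  forall b, le_ext b k -> ~ has_bridge S b.

Definition no_2cycle n p (S : path_system n p) : Prop :=
  forall (i j : 'I_p) (u v : 'I_n),
    ~ (prec (path_of S i) u v /\ prec (path_of S j) v u).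

(* admissible systems for beta(n,p,k) *)
Definition admissible n p (k : option nat) (S : path_system n p) : Prop :=
  valid_ps S /\ girth_gt S k.

(* Main.v *)
Require Import Defs.
From mathcomp Require Import all_boot.
From mathcomp Require Import zify.
From Stdlib Require Import Classical.

Set Implicit Arguments. Unset Strict Implicit. Unset Printing Implicit Defensive.

Lemma ex_max (P : nat -> Prop) B : P 0 -> (forall t, P t -> t <= B) ->
  exists t, P t /\ forall t', P t' -> t' <= t.
Proof.
move=> P0 HB.
have H : forall m, (exists t, P t /\ forall t', P t' -> t' <= t) \/
                   (forall t, P t -> t <= B - m).
  elim=> [|m [IH|IH]]; first by right=> t /HB; rewrite subn0.
  - by left.
  - case: (classic (P (B - m))) => [Hp|Hn]; first by left; exists (B - m).
    right=> t Pt; have := IH t Pt; have : t <> B - m by move=> e; apply: Hn; rewrite -e.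
    lia.
case: (H B) => [//|HB0]; exists 0; split=> // t' /HB0; lia.
Qed.

Ltac neqs := rewrite /= !inE !negb_or !andbT; repeat (apply/andP; split);
  first [done | by rewrite eq_sym].

Section PS.
Variables (n p : nat).
Implicit Types (s : seq 'I_n) (x y : 'I_n).

Lemma prec_asym s x y : prec s x y -> prec s y x -> False.
Proof. by move=> /and3P[_ _ h1] /and3P[_ _ h2]; lia. Qed.

Lemma prec_neq s x y : prec s x y -> x != y.
Proof. by apply: contraTneq => ->; apply/negP => h; apply: (prec_asym h h). Qed.

Lemma prec_total s x y : x \in s -> y \in s -> x != y -> prec s x y || prec s y x.
Proof.
move=> hx hy xy; rewrite /prec hx hy /=.
case: ltngtP => // e; case/eqP: xy; apply: (index_inj x hx hy); exact: e.
Qed.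

Lemma prec_cons z s x y : z != x -> z != y -> prec (z :: s) x y = prec s x y.
Proof. by move=> zx zy; rewrite /prec /= !inE (eq_sym x) (eq_sym y) (negbTE zx) (negbTE zy) /= ltnS. Qed.

Lemma prec_filter (a : pred 'I_n) s x y : prec (filter a s) x y -> prec s x y.
Proof.
elim: s => [|z s IH] //=.
case: (eqVneq z x) => [<-|zx].
  case: (eqVneq z y) => [<-|zy]; first by move=> /prec_neq; rewrite eqxx.
  case: ifP => az.
    rewrite /prec /= eqxx (negbTE zy) !inE eqxx /= mem_filter.
    by case/andP=> /orP[->//|/andP[_ ->]]; rewrite orbT.
  by case/and3P; rewrite mem_filter az.
case: (eqVneq z y) => [<-|zy].
  case: ifP => az; last by case/and3P=> _; rewrite mem_filter az.
  by rewrite /prec /= !inE !eqxx ltn0 !andbF.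
rewrite prec_cons //; case: ifP => az //.
by rewrite prec_cons.
Qed.


Lemma nth_inj (T : eqType) (s : seq T) (d : T) m : size s = m -> uniq s ->
  injective (fun i : 'I_m => nth d s i).
Proof.
move=> Hs Hu i j /eqP; rewrite nth_uniq ?Hs ?ltn_ord // => /eqP e; exact: val_inj.
Qed.

Lemma bridge2 (S : path_system n p) x y (j j' : 'I_p) :
  j != j' -> prec (path_of S j) x y -> prec (path_of S j') x y -> has_bridge S 2.
Proof.
move=> jj' H1 H2; exists 1; split=> //.
exists (fun i : 'I_2 => nth x [:: x; y] i), (fun i : 'I_2 => nth j [:: j; j'] i).
split; first by apply: nth_inj => //=; rewrite inE andbT (prec_neq H1).
split; first by apply: nth_inj => //=; rewrite inE andbT jj'.
split; last exact: H2.
by case=> [[|//] ?]; exact: H1.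
Qed.

Lemma bridge3 (S : path_system n p) x y z (j1 j2 j3 : 'I_p) :
  uniq [:: x; y; z] -> uniq [:: j1; j2; j3] ->
  prec (path_of S j1) x y -> prec (path_of S j2) y z -> prec (path_of S j3) x z ->
  has_bridge S 3.
Proof.
move=> u1 u2 H1 H2 H3; exists 2; split=> //.
exists (fun i : 'I_3 => nth x [:: x; y; z] i), (fun i : 'I_3 => nth j1 [:: j1; j2; j3] i).
split; first exact: nth_inj.
split; first exact: nth_inj.
split; last exact: H3.
by case=> [[|[|//]] ?]; [exact: H1 | exact: H2].
Qed.

Definition Nrel (S : path_system n p) (i j : 'I_p) (x : 'I_n) : bool :=
  [exists y, prec (path_of S i) y x && prec (path_of S j) x y].

Lemma Nrel_uniq (S : path_system n p) k :
  girth_gt S k -> (match k with Some k0 => 3 <= k0 | None => true end) ->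
  forall i j j' x, Nrel S i j x -> Nrel S i j' x -> j = j'.
Proof.
move=> Hg Hk i j j' x /existsP[y /andP[Hy1 Hy2]] /existsP[y' /andP[Hy1' Hy2']].
apply/eqP; apply/negP => /negP jj'.
have g2 : ~ has_bridge S 2 by apply: Hg; case: k Hk => //= k0 Hk; lia.
have g3 : ~ has_bridge S 3 by apply: Hg; case: k Hk.
have ij : i != j by apply/eqP => e; subst; apply: (prec_asym Hy1 Hy2).
have ij' : i != j' by apply/eqP => e; subst; apply: (prec_asym Hy1' Hy2').
case: (eqVneq y y') => [e|yy'].
  by subst; apply: g2; exact: bridge2 jj' Hy2 Hy2'.
have xy := prec_neq Hy2; have xy' := prec_neq Hy2'.
have [yi _ _] := and3P Hy1; have [yi' _ _] := and3P Hy1'.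
case/orP: (prec_total yi yi' yy') => h.
  apply: g3; apply: (bridge3 _ _ Hy2 h Hy2').
    by neqs.
  by neqs.
apply: g3; apply: (bridge3 _ _ Hy2' h Hy2).
  by neqs.
by neqs.
Qed.


Definition del (S : path_system n p) (r : rel 'I_p) (i : 'I_p) : pred 'I_n :=
  fun x => [exists j, r i j && Nrel S i j x].

Definition sub (S : path_system n p) (r : rel 'I_p) : path_system n p :=
  [tuple filter (predC (del S r i)) (tnth S i) | i < p].

Lemma sub_prec S r i x y : prec (path_of (sub S r) i) x y ->
  [/\ prec (path_of S i) x y, ~~ del S r i x & ~~ del S r i y].
Proof.
rewrite /path_of tnth_mktuple => h; split; first exact: prec_filter h.
  by case/and3P: h; rewrite mem_filter => /andP[].
by case/and3P: h => _; rewrite mem_filter => /andP[].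
Qed.

Lemma sub_valid S r : valid_ps S -> valid_ps (sub S r).
Proof.
move=> /all_tnthP H; apply/all_tnthP => i; rewrite tnth_mktuple filter_uniq //; exact: H.
Qed.

Lemma sub_girth S r k : girth_gt S k -> girth_gt (sub S r) k.
Proof.
move=> Hg b Hb [b' [eb [v [q [Hv [Hq [H1 H2]]]]]]]; apply: (Hg _ Hb).
exists b'; split=> //; exists v, q; do 2 split=> //; split.
  by move=> i; have [] := sub_prec (H1 i).
by have [] := sub_prec H2.
Qed.

Lemma sub_no2 S r : (forall i j, i != j -> r i j || r j i) -> no_2cycle (sub S r).
Proof.
move=> Hr i j u v [/sub_prec [P1 nu nv] /sub_prec [P2 nv' nu']].
case: (eqVneq i j) => [e|ij]; first by subst; apply: (prec_asym P1 P2).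
case/orP: (Hr i j ij) => rij.
  case/negP: nv; apply/existsP; exists j; rewrite rij; apply/existsP; exists u.
  by rewrite P1 P2.
case/negP: nu'; apply/existsP; exists i; rewrite rij; apply/existsP; exists v.
by rewrite P1 P2.
Qed.

Lemma ps_sizeE (S : path_system n p) : ps_size S = \sum_(i < p) size (tnth S i).
Proof. by rewrite /ps_size sumnE big_map big_tuple. Qed.

Lemma size_sub S r : ps_size (sub S r) = \sum_(i < p) count (predC (del S r i)) (tnth S i).
Proof. by rewrite ps_sizeE; apply: eq_bigr => i _; rewrite tnth_mktuple size_filter. Qed.

Definition rA : rel 'I_p := fun i j => i < j.
Definition rB : rel 'I_p := fun i j => j < i.

Lemma sum_sub S k : girth_gt S k -> (match k with Some k0 => 3 <= k0 | None => true end) ->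
  ps_size S <= ps_size (sub S rA) + ps_size (sub S rB).
Proof.
move=> Hg Hk; rewrite !size_sub ps_sizeE -big_split /=; apply: leq_sum => i _.
rewrite -count_predUI; apply: leq_trans (leq_addr _ _).
rewrite -count_predT; apply: eq_leq; apply: eq_in_count => x _ /=.
rewrite -negb_and; apply/esym/negP => /andP[/existsP[j /andP[ij Nj]] /existsP[j' /andP[ji Nj']]].
have e := Nrel_uniq Hg Hk Nj Nj'; subst j'; rewrite /rA /rB in ij ji; lia.
Qed.

Lemma size_le (S : path_system n p) : valid_ps S -> ps_size S <= p * n.
Proof.
move=> /all_tnthP H; rewrite ps_sizeE -[p in p * n]card_ord -sum_nat_const.
apply: leq_sum => i _; have := H i => /card_uniqP <-.
by rewrite -[n in _ <= n]card_ord max_card.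
Qed.

End PS.

Theorem lemma3p10 :
  exists C : nat, 0 < C /\
  forall (n p : nat) (k : option nat),
    0 < n -> 0 < p -> (match k with Some k0 => 3 <= k0 | None => true end) ->
    exists S : path_system n p,
      admissible k S /\ no_2cycle S /\
      forall S' : path_system n p, admissible k S' ->
        ps_size S' <= C * ps_size S.
Proof.
exists 2; split=> // n p k _ _ Hk.
have [t [[S0 [[V0 G0] <-]] Hmax]] : exists t,
  (exists S : path_system n p, admissible k S /\ ps_size S = t) /\
  forall t', (exists S : path_system n p, admissible k S /\ ps_size S = t') -> t' <= t.
  apply: (ex_max (B := p * n)).
- exists [tuple [::] | i < p]; split; last by rewrite ps_sizeE big1 // => i _; rewrite tnth_mktuple.
  split; first by apply/all_tnthP => i; rewrite tnth_mktuple.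
  move=> b _ [b' [_ [v [q [_ [_ [_ H2]]]]]]].
  by move: H2; rewrite /path_of tnth_mktuple.
- by move=> t [S [[V _] <-]]; exact: size_le.
have Hs := sum_sub G0 Hk.
have HA : admissible k (sub S0 (rA (p:=p))) by split; [exact: sub_valid | exact: sub_girth].
have HB : admissible k (sub S0 (rB (p:=p))) by split; [exact: sub_valid | exact: sub_girth].
have nA : no_2cycle (sub S0 (rA (p:=p))).
  by apply: sub_no2 => i j ij; rewrite /rA -neq_ltn.
have nB : no_2cycle (sub S0 (rB (p:=p))).
  by apply: sub_no2 => i j ij; rewrite /rB orbC -neq_ltn.
case: (leqP (ps_size (sub S0 (rB (p:=p)))) (ps_size (sub S0 (rA (p:=p))))) => h.
  exists (sub S0 (rA (p:=p))); do 2 split=> //.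
  move=> S' HS'; have := Hmax _ (ex_intro _ S' (conj HS' erefl)); lia.
exists (sub S0 (rB (p:=p))); do 2 split=> //.
move=> S' HS'; have := Hmax _ (ex_intro _ S' (conj HS' erefl)); lia.
Qed.
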